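(* Let $\Gamma$ be a finite dynamic game with ordinal preferences and perfect recall, let $u=(u_j)_{j\in I}$ be a profile of utility functions with $u_j\in\mathcal U_j$ for every $j$, and let $R\subseteq S$ be a restriction. Then $\mathbb M(R)[u]\subseteq\mathbb U(R)$.
   Context: A finite dynamic game with ordinal preferences and perfect recall $\Gamma$ consists of: a finite set of players $I$; a finite rooted tree of histories (finite sequences of action profiles, simultaneous moves allowed) with terminal histories $Z$; for each $i$ a partition $H_i$ of the non-terminal histories where $i$ is active (at least two actions) into information sets with identical available actions; perfect recall; complete transitive preferences $\succsim_i$ on $Z$ (asymmetric part $\succ_i$). Strategies of $i$ are equivalence classes of behaviorally equivalent standard strategies (action assignments to $H_i$, identified when they allow the same information sets and prescribe the same actions there); $S_i$ is the finite set of strategies, $S=\prod_jS_j$, $S_{-i}=\prod_{j\ne i}S_j$, $\zeta:S\to Z$ the outcome map. For $h\in H_i$, $S_i(h)$, $S_{-i}(h)$ are strategies of $i$, resp. profiles of others, reaching $h$; $H_i(s_i)=\{h\in H_i:s_i\in S_i(h)\}$. A restriction is a nonempty $R=\prod_jR_j\subseteq S$; $R_i(h)=R_i\cap S_i(h)$, $R_{-i}(h)=R_{-i}\cap S_{-i}(h)$, $R^i(h)=R_i(h)\times R_{-i}(h)$. For $P=P_i\times P_{-i}$ ($P_{-i}\subseteq S_{-i}$ not necessarily a product), $s_i\in P_i$ is weakly dominated relative to $P$ by $t_i\in P_i$ if $\zeta(t_i,s_{-i})\succsim_i\zeta(s_i,s_{-i})$ for all $s_{-i}\in P_{-i}$ with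 $\succ_i$ for some; B-dominated w.r.t. $P$ if for every nonempty $Q_{-i}\subseteq P_{-i}$ it is weakly dominated relative to $P_i\times Q_{-i}$ by some strategy in $P_i$. $s_i\in R_i$ is conditionally B-dominated w.r.t. $R$ if some $h\in H_i(s_i)$ has $R^i(h)\ne\emptyset$ and $s_i$ B-dominated w.r.t. $R^i(h)$. $\mathbb U_i(R)$ is the set of $s_i\in R_i$ not conditionally B-dominated w.r.t. $R$; $\mathbb U(R)=\prod_j\mathbb U_j(R)$. $\mathcal U_i$ is the set of $u_i:Z\to\mathbb R$ with $u_i(z)\ge u_i(z')\iff z\succsim_iz'$. Given $u_i$, $s_i\in P_i$ is strictly dominated relative to $P=P_i\times P_{-i}$ by a mixed strategy if there is a probability distribution $\sigma$ on $P_i$ with $\sum_{t_i\in P_i}\sigma(t_i)u_i(\zeta(t_i,s_{-i}))>u_i(\zeta(s_i,s_{-i}))$ for every $s_{-i}\in P_{-i}$. $\mathbb M_i(R)[u_i]$ is the set of $s_i\in R_i$ such that for every $h\in H_i(s_i)$ with $R^i(h)\ne\emptyset$, $s_i$ is not strictly dominated relative to $R^i(h)$ by a mixed strategy (given $u_i$); $\mathbb M(R)[u]=\prod_j\mathbb M_j(R)[u_j]$. *)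

(* Defs.v *)
From HB Require Import structures.
From mathcomp Require Import all_boot all_order all_algebra.
From mathcomp Require Import reals.
Set Implicit Arguments.
Unset Strict Implicit.
Unset Printing Implicit Defensive.
Import Order.TTheory GRing.Theory Num.Theory.

Record tree := Tree {
  player : finType;
  action : finType;
  hist : pred (seq {ffun player -> action});
  hist_nil : hist [::];
  hist_prefix : forall h a, hist (rcons h a) -> hist h;
  depth : nat;
  hist_bounded : forall h, hist h -> size h <= depth;
  (* simultaneous moves: the feasible profiles at a non-terminal history
     form the product of the players' individual feasible action sets *)
  hist_prod : forall h (a : {ffun player -> action}),
      hist h -> (exists b, hist (rcons h b)) ->
      (forall i, exists b, hist (rcons h b) /\ b i = a i) ->
      hist (rcons h a)
}.

Section TreeDefs.
Variable T : tree.
Definition prof := {ffun player T -> action T}.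

Definition avail (h : seq prof) (i : player T) : {set action T} :=
  [set x | [exists a : prof, @hist T (rcons h a) && (a i == x)]].

Definition active (i : player T) (h : seq prof) : bool := 1 < #|avail h i|.

Definition terminal (h : seq prof) : bool :=
  @hist T h && ~~ [exists a : prof, @hist T (rcons h a)].
End TreeDefs.

Fixpoint exp_aux (T : tree) (Inf : finType) (lab : player T -> seq (prof T) -> Inf)
    (i : player T) (pre h : seq (prof T)) : seq (Inf * action T) :=
  match h with
  | [::] => [::]
  | a :: h' => (if active i pre then [:: (lab i pre, a i)] else [::])
               ++ exp_aux lab i (rcons pre a) h'
  end.

Record game := Game {
  gtree :> tree;
  (* information sets of player i are the (nonempty) classes of active
     histories of i under the labelling lab i *)
  Inf : finType;
  lab : player gtree -> seq (prof gtree) -> Inf;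
  info_avail : forall i h h', @hist gtree h -> @hist gtree h' ->
      active i h -> active i h' -> lab i h = lab i h' -> avail h i = avail h' i;
  perfect_recall : forall i h h', @hist gtree h -> @hist gtree h' ->
      active i h -> active i h' -> lab i h = lab i h' ->
      exp_aux lab i [::] h = exp_aux lab i [::] h';
  pref : player gtree -> seq (prof gtree) -> seq (prof gtree) -> Prop;
  pref_complete : forall i z z', terminal z -> terminal z' -> pref i z z' \/ pref i z' z;
  pref_trans : forall i z1 z2 z3, terminal z1 -> terminal z2 -> terminal z3 ->
      pref i z1 z2 -> pref i z2 z3 -> pref i z1 z3
}.

Section GameDefs.
Variable g : game.
Local Notation player := (player g).
Local Notation action := (action g).
Local Notation prof := (prof g).
Local Notation hist := (@hist g).

Definition spref (i : player) (z z' : seq prof) : Prop := pref i z z' /\ ~ pref i z' z.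

Definition infoset (i : player) (x : Inf g) : Prop :=
  exists h, hist h /\ active i h /\ lab i h = x.

Fixpoint follows_aux (i : player) (c : Inf g -> option action) (pre h : seq prof) : Prop :=
  match h with
  | [::] => True
  | a :: h' => (active i pre -> c (lab i pre) = Some (a i)) /\ follows_aux i c (rcons pre a) h'
  end.
Definition follows i c h := follows_aux i c [::] h.

Definition std_strat := {ffun Inf g -> action}.
Definition feasible (i : player) (f : std_strat) : Prop :=
  forall h, hist h -> active i h -> f (lab i h) \in avail h i.
Definition allows (i : player) (f : std_strat) (x : Inf g) : Prop :=
  exists h, hist h /\ active i h /\ lab i h = x /\ follows i (fun y => Some (f y)) h.

(* strategies = behavioural-equivalence classes of standard strategies,
   represented canonically by the partial assignment defined exactly on the
   allowed information sets *)
Definition rstrat := {ffun Inf g -> option action}.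
Definition represents (i : player) (f : std_strat) (r : rstrat) : Prop :=
  feasible i f /\
  forall x, (allows i f x -> r x = Some (f x)) /\ (~ allows i f x -> r x = None).
Definition is_strat (i : player) (r : rstrat) : Prop := exists f, represents i f r.

Definition sprof := {ffun player -> rstrat}.
Definition upd (p : sprof) (i : player) (t : rstrat) : sprof :=
  [ffun j => if j == i then t else p j].

Definition step (p : sprof) (h : seq prof) : seq prof :=
  if [pick a : prof | hist (rcons h a) &&
        [forall j, active j h ==> (p j (lab j h) == Some (a j))]] is Some a
  then rcons h a else h.
Definition zeta (p : sprof) : seq prof := iter (depth g) (step p) [::].

Definition reaches (i : player) (r : rstrat) (x : Inf g) : Prop :=
  is_strat i r /\ exists h, hist h /\ active i h /\ lab i h = x /\ follows i r h.
(* S_{-i}(h): profiles of the others reaching x (the i-th component of p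
   is ignored) *)
Definition reaches_others (i : player) (p : sprof) (x : Inf g) : Prop :=
  (forall j, j != i -> is_strat j (p j)) /\
  exists h, hist h /\ active i h /\ lab i h = x /\ forall j, j != i -> follows j (p j) h.

Definition restriction (R : player -> {set rstrat}) : Prop :=
  (forall j, R j != set0) /\ (forall j r, r \in R j -> is_strat j r).

Definition Ri_at (R : player -> {set rstrat}) i x (t : rstrat) : Prop :=
  t \in R i /\ reaches i t x.
Definition Rmi_at (R : player -> {set rstrat}) i x (p : sprof) : Prop :=
  (forall j, j != i -> p j \in R j) /\ reaches_others i p x.
Definition Rix_nonempty R i x : Prop :=
  (exists t, Ri_at R i x t) /\ (exists p, Rmi_at R i x p).

Definition wdominated (i : player) (Pi : rstrat -> Prop) (Pmi : sprof -> Prop)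
    (s t : rstrat) : Prop :=
  Pi s /\ Pi t /\
  (forall p, Pmi p -> pref i (zeta (upd p i t)) (zeta (upd p i s))) /\
  (exists p, Pmi p /\ spref i (zeta (upd p i t)) (zeta (upd p i s))).

Definition Bdominated (i : player) (Pi : rstrat -> Prop) (Pmi : sprof -> Prop)
    (s : rstrat) : Prop :=
  Pi s /\
  forall Q : sprof -> Prop, (exists p, Q p) -> (forall p, Q p -> Pmi p) ->
    exists t, Pi t /\ wdominated i Pi Q s t.

Definition cond_Bdominated (R : player -> {set rstrat}) i (s : rstrat) : Prop :=
  s \in R i /\
  exists x, infoset i x /\ reaches i s x /\ Rix_nonempty R i x /\
    Bdominated i (Ri_at R i x) (Rmi_at R i x) s.
Definition UU (R : player -> {set rstrat}) i (s : rstrat) : Prop :=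
  s \in R i /\ ~ cond_Bdominated R i s.

Definition represents_pref {Rl : realType} (i : player) (u : seq prof -> Rl) : Prop :=
  forall z z', terminal z -> terminal z' -> ((u z' <= u z)%R <-> pref i z z').

Definition mixed_sdominated {Rl : realType} (i : player) (u : seq prof -> Rl)
    (Pi : rstrat -> Prop) (Pmi : sprof -> Prop) (s : rstrat) : Prop :=
  exists sigma : rstrat -> Rl,
    (forall t, 0 <= sigma t)%R /\ (forall t, sigma t != 0%R -> Pi t) /\
    (\sum_(t : rstrat) sigma t = 1)%R /\
    forall p, Pmi p ->
      (\sum_(t : rstrat) sigma t * u (zeta (upd p i t)) > u (zeta (upd p i s)))%R.

Definition MM {Rl : realType} (R : player -> {set rstrat}) i (u : seq prof -> Rl)
    (s : rstrat) : Prop :=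
  s \in R i /\
  forall x, infoset i x -> reaches i s x -> Rix_nonempty R i x ->
    ~ mixed_sdominated i u (Ri_at R i x) (Rmi_at R i x) s.

End GameDefs.

(* Main.v *)
Require Import Defs.
From mathcomp Require Import all_boot all_order all_algebra.
From mathcomp Require Import reals.
From mathcomp Require Import ring lra boolp.
From Stdlib Require Import Classical.
Local Open Scope ring_scope.
Set Implicit Arguments. Unset Strict Implicit.
Import Order.TTheory GRing.Theory Num.Theory.

Section Z.
Variable g : game.

Lemma follows_rcons (i : player g) c pre h a :
  follows_aux i c pre (rcons h a) <->
  follows_aux i c pre h /\ (active i (pre ++ h) -> c (lab i (pre ++ h)) = Some (a i)).
Proof.
elim: h pre => [|b h IH] pre /=.
  by rewrite cats0; split; [case=> H _; split | case=> _ H; split].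
rewrite IH cat_rcons; tauto.
Qed.

Lemma follows_strat (i : player g) f (r : rstrat g) pre h :
  represents i f r -> follows_aux i r pre h -> follows_aux i (fun y => Some (f y)) pre h.
Proof.
move=> [_ Hr]; elim: h pre => [|a h IH] pre //= [H1 H2]; split; last exact: IH.
move=> act; have := H1 act.
case: (classic (allows i f (lab i pre))) => al.
  by rewrite ((Hr _).1 al).
by rewrite ((Hr _).2 al).
Qed.

Definition inv (p : sprof g) k h :=
  @hist g h /\ (forall j, follows j (p j) h) /\ (terminal h \/ size h = k).

Lemma step_inv (p : sprof g) k h : (forall j, is_strat j (p j)) -> inv p k h -> inv p k.+1 (step p h).
Proof.
move=> Hs [hh [hf hk]].
rewrite /step; case: pickP => [a /andP [ha /forallP Ha]|Hn].
  split; first exact: ha.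
  split.
    move=> j; rewrite /follows follows_rcons cat0s; split; first exact: hf.
    by move=> act; have := Ha j; rewrite act /= => /eqP.
  case: hk => [/andP [_ /existsP []]|hs]; [by exists a | right; by rewrite size_rcons hs].
split; first exact: hh. split; first exact: hf. left.
rewrite /terminal hh /=; apply/negP => /existsP [a0 ha0].
pose a := [ffun j => if active j h then odflt (a0 j) (p j (lab j h)) else a0 j].
have key : forall j, active j h -> exists f, represents j f (p j) /\
    p j (lab j h) = Some (f (lab j h)).
  move=> j act; have [f Hf] := Hs j; exists f; split => //.
  apply: (Hf.2 _).1; exists h; split => //; split => //; split => //.
  exact: follows_strat Hf (hf j).
have hA : @hist g (rcons h a).
  apply: hist_prod => //; first by exists a0.
  move=> j; rewrite ffunE; case act: (active j h); last by exists a0.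
  have [f [Hf ->]] := key j act => /=.
  have := Hf.1 h hh act; rewrite inE => /existsP [b /andP [hb /eqP eb]].
  by exists b.
have := Hn a; rewrite hA /=; move/negP; apply; apply/forallP => j.
apply/implyP => act; rewrite ffunE act.
by have [f [_ ->]] := key j act.
Qed.

Lemma zeta_terminal (p : sprof g) : (forall j, is_strat j (p j)) -> terminal (zeta p).
Proof.
move=> Hs.
have : forall k, inv p k (iter k (step p) [::]).
  elim=> [|k IH]; first by split; [exact: hist_nil | split => //; right].
  exact: step_inv.
move=> /(_ (depth g)) [hh [_ [//|hs]]].
rewrite /terminal hh /=; apply/negP => /existsP [a ha].
have := hist_bounded ha; rewrite size_rcons /zeta hs ltnn //.
Qed.
End Z.
Section M.
Variable Rl : realType.

Lemma small_eps (T : finType) (A : pred T) (f : T -> Rl) :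
  (forall p, A p -> 0 < f p) -> exists e : Rl, 0 < e /\ e <= 1 /\ forall p, A p -> e <= f p.
Proof.
move=> Hf.
suff: forall s : seq T, exists e : Rl, 0 < e /\ e <= 1 /\ forall p, p \in s -> A p -> e <= f p.
  by case/(_ (enum T)) => e [e0 [e1 H]]; exists e; do 2 split => //; move=> p; apply: H; rewrite mem_enum.
elim=> [|a s [e [e0 [e1 H]]]]; first by exists 1; split => //.
case Aa: (A a).
  exists (Num.min e (f a)); split; first by rewrite lt_min e0 Hf.
  split; first by rewrite ge_min e1.
  move=> p; rewrite inE => /orP [/eqP -> _|ps Ap]; first by rewrite ge_min lexx orbT.
  by rewrite ge_min H.
exists e; do 2 split => //; move=> p; rewrite inE => /orP [/eqP -> |]; first by rewrite Aa.
exact: H.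
Qed.

Lemma sum_mix (T : finType) (t : T) (e : Rl) (s' F : T -> Rl) :
  \sum_(t' : T) ((1 - e) * (t' == t)%:R + e * s' t') * F t' =
  (1 - e) * F t + e * \sum_(t' : T) s' t' * F t'.
Proof.
under eq_bigr do rewrite mulrDl.
rewrite big_split /= mulr_sumr; congr (_ + _); last by apply: eq_bigr => ? _; rewrite mulrA.
rewrite (bigD1 t) //= eqxx mulr1 big1 ?addr0 // => t' /negbTE ->.
by rewrite mulr0 mul0r.
Qed.

Variable g : game.

Lemma main_ind (i : player g) (u : seq (prof g) -> Rl) (hu : represents_pref i u)
  (Pi : rstrat g -> Prop) (Pmi : sprof g -> Prop) s0 :
  (forall t p, Pi t -> Pmi p -> terminal (zeta (upd p i t))) ->
  Pi s0 ->
  (forall Q, (exists p, Q p) -> (forall p, Q p -> Pmi p) ->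
     exists t, Pi t /\ wdominated i Pi Q s0 t) ->
  forall n (Qs : {set sprof g}), (#|Qs| <= n)%N -> (exists p, p \in Qs) ->
  (forall p, p \in Qs -> Pmi p) ->
  exists sigma : rstrat g -> Rl, (forall t, 0 <= sigma t) /\
    (forall t, sigma t != 0 -> Pi t) /\ \sum_t sigma t = 1 /\
    forall p, p \in Qs ->
      \sum_t sigma t * u (zeta (upd p i t)) > u (zeta (upd p i s0)).
Proof.
move=> Hterm Hs0 HB; elim=> [|n IH] Qs.
  by move=> Hc [p Hp]; move: Hc; rewrite leqn0 => /eqP/cards0_eq E; rewrite E inE in Hp.
move=> Hc Hne HQ.
have [t [Ht [_ [_ [Hw [p0 [Hp0 Hst]]]]]]] := HB (fun p => p \in Qs) Hne HQ.
set U := fun p t' => u (zeta (upd p i t')).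
have hle : forall p, p \in Qs -> U p s0 <= U p t.
  move=> p Hp; apply/(hu _ _ (Hterm _ _ Ht (HQ _ Hp)) (Hterm _ _ Hs0 (HQ _ Hp))).
  exact: Hw.
have hlt : U p0 s0 < U p0 t.
  rewrite ltNge; apply/negP => H; apply: Hst.2.
  by apply/(hu _ _ (Hterm _ _ Hs0 (HQ _ Hp0)) (Hterm _ _ Ht (HQ _ Hp0))).
pose Qs' := [set p in Qs | U p t == U p s0].
have sumind : forall F : rstrat g -> Rl, \sum_t' (t' == t)%:R * F t' = F t.
  move=> F; rewrite (bigD1 t) //= eqxx mul1r big1 ?addr0 // => t' /negbTE ->.
  by rewrite mul0r.
case: (set_0Vmem Qs') => [E|[p1 Hp1]].
  exists (fun t' => (t' == t)%:R); split; first by move=> t'; rewrite ler0n.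
  split; first by move=> t' /=; have [->//|ne] := eqVneq t' t; rewrite /= eqxx.
  split; first by rewrite -[RHS](sumind (fun _ => 1)); apply: eq_bigr => ? _; rewrite mulr1.
  move=> p Hp; rewrite sumind; change (U p s0 < U p t); rewrite lt_neqAle hle // andbT.
  apply/negP => /eqP H; have : p \in Qs' by rewrite inE Hp H eqxx.
  by rewrite E inE.
have Hc' : (#|Qs'| <= n)%N.
  have : Qs' \proper Qs.
    apply/properP; split; first by apply/subsetP => p; rewrite inE => /andP [].
    exists p0 => //; rewrite inE Hp0 /=; by rewrite eq_sym lt_eqF.
  by move/proper_card => H; rewrite -ltnS; apply: leq_trans H Hc.
have HQ' : forall p, p \in Qs' -> Pmi p by move=> p; rewrite inE => /andP [/HQ].
have [s' [s'0 [s'P [s'1 s'D]]]] := IH Qs' Hc' (ex_intro _ p1 Hp1) HQ'.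
pose S' p := \sum_t' s' t' * U p t'.
have Hf : forall p, (fun p => (p \in Qs) && (U p t != U p s0)) p ->
   0 < (fun p => (U p t - U p s0) / (`|U p t - S' p| + 1)) p.
  move=> p /andP [Hp Hn]; apply: divr_gt0; last by rewrite ltr_pwDr.
  by rewrite subr_gt0 lt_neqAle eq_sym Hn hle.
have [e [e0 [e1 He]]] := small_eps Hf.
exists (fun t' => (1 - e) * (t' == t)%:R + e * s' t').
split; first by move=> t' /=; apply: addr_ge0; apply: mulr_ge0 => //; [rewrite subr_ge0|rewrite ltW].
split.
  move=> t' /=; have [-> _ //|_] := eqVneq t' t.
  by rewrite mulr0 add0r mulf_eq0 negb_or => /andP [_ /s'P].
split.
  transitivity (\sum_t' ((1 - e) * (t' == t)%:R + e * s' t') * 1).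
    by apply: eq_bigr => ? _; rewrite mulr1.
  rewrite sum_mix mulr1.
  have -> : \sum_t' s' t' * 1 = \sum_t' s' t' by apply: eq_bigr => ? _; rewrite mulr1.
  by rewrite s'1 mulr1 subrK.
move=> p Hp; rewrite sum_mix; change (U p s0 < (1 - e) * U p t + e * S' p).
case: (boolP (U p t == U p s0)) => [/eqP Heq|Hn].
  have Hp' : p \in Qs' by rewrite inE Hp Heq eqxx.
  have H : U p s0 < S' p by apply: s'D.
  have -> : (1 - e) * U p t + e * S' p = U p s0 + e * (S' p - U p s0).
    by rewrite Heq; ring.
  by rewrite ltrDl mulr_gt0 // subr_gt0.
have Hd : e <= (U p t - U p s0) / (`|U p t - S' p| + 1) by apply: He; rewrite Hp.
have Hpos : 0 < `|U p t - S' p| + 1 by rewrite ltr_pwDr.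
move: Hd; rewrite ler_pdivlMr // => Hd.
have Hab : e * (U p t - S' p) <= e * `|U p t - S' p|.
  by apply: ler_wpM2l; [apply: ltW | apply: ler_norm].
have -> : (1 - e) * U p t + e * S' p = U p t - e * (U p t - S' p) by ring.
move: Hd Hab; rewrite mulrDr mulr1.
move: (e * (U p t - S' p)) (e * `|U p t - S' p|) => X Y.
lra.
Qed.
End M.

Theorem proposition4 (Rl : realType) (g : game)
    (u : player g -> seq (prof g) -> Rl)
    (hu : forall j, represents_pref j (u j))
    (R : player g -> {set rstrat g})
    (hR : restriction R) :
  forall s : sprof g,
    (forall j, MM R j (u j) (s j)) -> (forall j, UU R j (s j)).
Proof.
move=> s Hm j; split; first exact: (Hm j).1.
move=> [sin [x [Hx [Hreach [Hne [Hs0 HB]]]]]].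
apply: ((Hm j).2 x Hx Hreach Hne).
have Hterm : forall t p, Ri_at R j x t -> Rmi_at R j x p -> terminal (zeta (upd p j t)).
  move=> t p [Ht _] [Hp _]; apply: zeta_terminal => k; rewrite ffunE.
  have [_ HRs] := hR; case: eqP => [-> |/eqP nk]; [exact: HRs _ _ Ht | exact: HRs _ _ (Hp k nk)].
pose Qs := [set p : sprof g | `[< Rmi_at R j x p >]].
have HQ : forall p, p \in Qs -> Rmi_at R j x p by move=> p; rewrite inE => /asboolP.
have [p1 Hp1] := Hne.2.
have Hne' : exists p, p \in Qs by exists p1; rewrite inE; apply/asboolP.
have [sigma [H1 [H2 [H3 H4]]]] := main_ind (hu j) Hterm Hs0 HB (leqnn #|Qs|) Hne' HQ.
exists sigma; do 3 split => //.
move=> p Hp; apply: H4; rewrite inE; exact/asboolP.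
Qed.
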